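(* Let $q$ be a prime power, $m>1$ an integer, and $j$ an integer with $1\le j\le m-1$ and $\gcd(j,q-1)=1$. Let $\lambda_j(x)=\sum_{0\le i_1<i_2<\cdots<i_j\le m-1}x^{q^{i_1}+\cdots+q^{i_j}}$, the $j$-th elementary symmetric polynomial evaluated at $x,x^q,\ldots,x^{q^{m-1}}$. Then the map $\lambda_j:\mathbf{F}_{q^m}\to\mathbf{F}_q$, $\alpha\mapsto\lambda_j(\alpha)$, is surjective.
   Context: For $\alpha\in\mathbf{F}_{q^m}$ one has $\lambda_j(\alpha)\in\mathbf{F}_q$, so $\lambda_j$ indeed defines a map $\mathbf{F}_{q^m}\to\mathbf{F}_q$. *)

(* Defs.v *)
From mathcomp Require Import all_boot all_algebra all_field.
Set Implicit Arguments. Unset Strict Implicit. Unset Printing Implicit Defensive.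
Import GRing.Theory.
Local Open Scope ring_scope.

Definition lambda (L : finFieldType) (q m j : nat) (x : L) : L :=
  \sum_(S : {set 'I_m} | #|S| == j) x ^+ (\sum_(i in S) q ^ (nat_of_ord i))%N.

Definition prime_power (q : nat) : Prop :=
  exists p k : nat, [/\ prime p, (0 < k)%N & q = (p ^ k)%N].

(* Main.v *)
Require Import Defs.
From mathcomp Require Import all_boot all_algebra all_field.
Set Implicit Arguments. Unset Strict Implicit. Unset Printing Implicit Defensive.
Import GRing.Theory.
Lemma geom_lt (q n : nat) : 1 < q -> \sum_(i < n) q ^ i < q ^ n.
Proof.
move=> q1; elim: n => [|n IH]; first by rewrite big_ord0.
rewrite big_ord_recr /= expnS.
have : q ^ n + q ^ n <= q * q ^ n by rewrite addnn -mul2n leq_mul2r q1 orbT.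
by apply: leq_trans; rewrite ltn_add2r.
Qed.

Lemma digits_inj (q n : nat) (F G : 'I_n -> bool) : 1 < q ->
  \sum_(i < n) F i * q ^ i = \sum_(i < n) G i * q ^ i -> F =1 G.
Proof.
move=> q1; elim: n F G => [|n IH] F G; first by move=> _ [].
rewrite !big_ord_recl /= !expn0 !muln1.
have E (H : 'I_n.+1 -> bool) : \sum_(i < n) H (lift ord0 i) * q ^ (bump 0 i)
   = q * \sum_(i < n) H (lift ord0 i) * q ^ i.
  by rewrite big_distrr /=; apply: eq_bigr => i _; rewrite /bump /= add1n expnS mulnCA.
rewrite !E => h.
have hq : forall b : bool, b < q by case=> //; apply: ltnW.
have h0 : F ord0 = G ord0.
  have := congr1 (modn^~ q) h; rewrite ![_ + q * _]addnC ![q * _]mulnC !modnMDl !modn_small //.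
  by case: (F ord0); case: (G ord0).
move: h; rewrite h0 => /addnI /eqP; rewrite eqn_mul2l; case/orP.
  by move/eqP => q0; rewrite q0 in q1.
move/eqP/IH => H i; case: (unliftP ord0 i) => [j ->|->] //; exact: H.
Qed.

Definition ee (q m : nat) (S : {set 'I_m}) := (\sum_(i in S) q ^ (nat_of_ord i))%N.

Lemma ee_digits q m (S : {set 'I_m}) : ee q S = \sum_(i < m) (i \in S) * q ^ i.
Proof.
rewrite /ee big_mkcond /=; apply: eq_bigr => i _.
by case: (i \in S); rewrite ?mul1n ?mul0n.
Qed.

Lemma ee_inj q m (S T : {set 'I_m}) : 1 < q -> ee q S = ee q T -> S = T.
Proof.
move=> q1; rewrite !ee_digits => /(digits_inj q1) h; apply/setP => i; exact: h.
Qed.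

Lemma ee_lt q m (S : {set 'I_m}) : 1 < q -> ee q S < q ^ m.
Proof.
move=> q1; apply: leq_ltn_trans (geom_lt m q1).
rewrite /ee big_mkcond /=; apply: leq_sum => i _; by case: (i \in S).
Qed.



Local Open Scope ring_scope.

Lemma lambda_nonzero (L : finFieldType) (q m j : nat) :
  (1 < q)%N -> #|L| = (q ^ m)%N -> (j <= m)%N -> exists y : L, lambda q m j y != 0.
Proof.
move=> q1 cardL jm.
pose P : {poly L} := \sum_(S : {set 'I_m} | #|S| == j) 'X^(ee q S).
have hP y : P.[y] = lambda q m j y.
  by rewrite /P horner_sum; apply: eq_bigr => S _; rewrite hornerXn.
pose S0 : {set 'I_m} := [set widen_ord jm i | i : 'I_j].
have cS0 : #|S0| = j.
  rewrite card_imset ?card_ord //; move=> a b /(congr1 val) /= h; exact: val_inj.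
have P0 : P != 0.
  apply/eqP => /(congr1 (fun p : {poly L} => p`_(ee q S0))).
  rewrite coef0 /P coef_sum (bigD1 S0) ?cS0 //= coefXn eqxx big1.
    by rewrite addr0 => /eqP; rewrite oner_eq0.
  move=> S /andP [_ nS]; rewrite coefXn; case: eqP => // /(ee_inj q1) h.
  by rewrite h eqxx in nS.
have sP : (size P <= #|L|)%N.
  apply: leq_trans (size_sum _ _ _) _; apply/bigmax_leqP => S _.
  by rewrite size_polyXn cardL; apply: ee_lt.
have [y hy|h] := pickP (fun y : L => lambda q m j y != 0); first by exists y.
have hr : all (root P) (enum L).
  by apply/allP => y _; rewrite /root hP; have := h y => /negbFE.
by have := max_poly_roots P0 hr (enum_uniq L); rewrite -cardE ltnNge sP.
Qed.

Lemma lambda_prod (L : finFieldType) (q m j : nat) (x : L) :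
  lambda q m j x = \sum_(S : {set 'I_m} | #|S| == j) \prod_(i in S) x ^+ (q ^ (nat_of_ord i)).
Proof.
apply: eq_bigr => S _.
exact: (big_morph (fun n => x ^+ n) (exprD x) (expr0 x)).
Qed.

Lemma frob_add (L : finFieldType) (p k m : nat) : prime p ->
  #|L| = ((p ^ k) ^ m)%N -> forall x y : L, (x + y) ^+ (p ^ k) = x ^+ (p ^ k) + y ^+ (p ^ k).
Proof.
move=> pp cardL x y; apply: exprDn_char.
have pc := card_finPcharP (etrans cardL (esym (expnM p k m))) pp.
by rewrite pnatX (pnatE _ pp) pc.
Qed.

Lemma lambda_frob (L : finFieldType) (p k m j : nat) : prime p -> (0 < k)%N ->
  #|L| = ((p ^ k) ^ m)%N -> forall x : L, lambda (p ^ k) m j x ^+ (p ^ k) = lambda (p ^ k) m j x.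
Proof.
move=> pp k0 cardL x; set q := (p ^ k)%N.
have q0 : (0 < q)%N by rewrite expn_gt0 prime_gt0.
rewrite !lambda_prod.
rewrite (big_morph (fun z : L => z ^+ q) (frob_add pp cardL) (_ : 0 ^+ q = 0)); last first.
  by rewrite expr0n eqn0Ngt q0.
have hg (i : 'I_m) : (x ^+ (q ^ i)) ^+ q = x ^+ (q ^ (ordS i)).
  rewrite -exprM -expnSr /=.
  case: (ltnP i.+1 m) => h; first by rewrite modn_small.
  have ei : i.+1 = m by apply/eqP; rewrite eqn_leq h ltn_ord.
  by rewrite ei modnn expn0 -cardL expf_card.
transitivity (\sum_(S : {set 'I_m} | #|S| == j) \prod_(i in (@ordS m) @: S) x ^+ (q ^ (nat_of_ord i))).
  apply: eq_bigr => S _.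
  rewrite (big_morph (fun z : L => z ^+ q) (exprMn q) (expr1n _ q)).
  by rewrite big_imset /=; [apply: eq_bigr => i _; exact: hg | move=> a b _ _; apply: ordS_inj].
rewrite [RHS](reindex_inj (imset_inj (@ordS_inj m))) /=.
by apply: eq_bigl => S; rewrite card_imset //; apply: ordS_inj.
Qed.

Lemma lambda_scale (L : finFieldType) (q m j : nat) (t y : L) :
  t ^+ q = t -> lambda q m j (t * y) = t ^+ j * lambda q m j y.
Proof.
move=> tq; rewrite !lambda_prod big_distrr /=; apply: eq_bigr => S /eqP cS.
have ht (i : nat) : t ^+ (q ^ i) = t.
  by elim: i => [|i IH]; rewrite ?expn0 ?expr1 // expnSr exprM IH tq.
rewrite -cS -prodr_const -big_split /=; apply: eq_bigr => i _.
by rewrite exprMn ht.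
Qed.

Theorem lemma3p2 (L : finFieldType) (q m j : nat) :
  prime_power q -> (1 < m)%N -> #|L| = (q ^ m)%N ->
  (1 <= j)%N -> (j <= m - 1)%N -> coprime j (q - 1) ->
  forall c : L, c ^+ q = c -> exists a : L, lambda q m j a = c.
Proof.
move=> [p [k [pp k0 qE]]] m1 cardL j1 jm cop c cq.
have q1 : (1 < q)%N.
  by rewrite qE -(expn0 p) ltn_exp2l ?prime_gt1.
have [y hy] := lambda_nonzero (j := j) q1 cardL (leq_trans jm (leq_subr 1 m)).
set mu := lambda q m j y in hy.
have muq : mu ^+ q = mu by rewrite /mu qE lambda_frob // -qE.
have [->|c0] := eqVneq c 0.
  exists (0 * y); rewrite lambda_scale; last by rewrite expr0n; case: (q) q1.
  by rewrite expr0n; case: (j) j1 => // n _; rewrite mul0r.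
pose d := c / mu.
have d0 : d != 0 by rewrite mulf_neq0 ?invr_eq0.
have dq : d ^+ q = d by rewrite /d exprMn exprVn cq muq.
have dq1 : d ^+ (q - 1) = 1.
  apply: (mulIf d0); rewrite mul1r -exprSr subn1 prednK ?dq //; exact: ltnW.
have q10 : (0 < q - 1)%N by rewrite subn_gt0.
have [a _ ha] := Bezoutl j q10.
rewrite gcdnC (eqP cop) in ha.
have [K hK] := dvdnP ha.
have da : d * d ^+ (a * j) = 1 by rewrite -exprS -add1n hK mulnC exprM dq1 expr1n.
have dinv : d ^+ (a * j) = d^-1 by rewrite -[RHS]mulr1 -da mulKf.
pose t := (d ^+ a)^-1.
have tq : t ^+ q = t by rewrite /t exprVn -exprM mulnC exprM dq.
exists (t * y); rewrite lambda_scale // /t exprVn -exprM dinv invrK /d.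
by rewrite -/mu divfK.
Qed.
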